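(* Let $|\zeta\rangle$ be an $n$-qubit pure state and $\rho$ an $n$-qubit state. Let $x,z$ be the measurement outcomes of the state-based classical shadow procedure run on input $\rho$ with auxiliary state $|\zeta\rangle$. Then for all $x,z\in\{0,1\}^n$, $$\Pr[x,z\mid\zeta]=\frac{1}{2^n}\langle\zeta^*_{x,z}|\rho|\zeta^*_{x,z}\rangle.$$
   Context: State-based classical shadow procedure: registers $R_1,R_2$ of $n$ qubits; $R_1$ holds $\rho$, $R_2$ holds $|\zeta\rangle$; apply $n$ CNOT gates qubit by qubit with $R_1$ qubits as controls and $R_2$ qubits as targets, then $H^{\otimes n}$ on $R_1$, then measure $R_1$ and $R_2$ in the computational basis obtaining $z$ and $x$ respectively. $|\zeta_{x,z}\rangle=X^xZ^z|\zeta\rangle$ with $X^x=\bigotimes_jX^{x_j}$, $Z^z=\bigotimes_jZ^{z_j}$, and $|\zeta^*_{x,z}\rangle$ is its entrywise complex conjugate in the computational basis. *)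

(* Defs.v *)
From HB Require Import structures.
From mathcomp Require Import all_boot all_order all_algebra.
Set Implicit Arguments. Unset Strict Implicit. Unset Printing Implicit Defensive.
Import Order.TTheory GRing.Theory Num.Theory.
Local Open Scope ring_scope.

Section Defs.
Variable C : numClosedFieldType.

(* computational basis labels of n qubits *)
Definition bits (n : nat) := {ffun 'I_n -> bool}.

(* vectors and operators on the Hilbert space spanned by |t>, t : T *)
Definition vec (T : finType) := T -> C.
Definition op (T : finType) := T -> T -> C.

Definition idop (T : finType) : op T := fun i j => (i == j)%:R.
Definition mulop (T : finType) (A B : op T) : op T :=
  fun i k => \sum_j A i j * B j k.
Definition adjop (T : finType) (A : op T) : op T := fun i j => (A j i)^*.
(* apply a list of gates, the head of the list being applied first *)
Definition circuit (T : finType) (gs : seq (op T)) : op T :=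
  foldl (fun acc g => mulop g acc) (@idop T) gs.
Definition applyop (T : finType) (A : op T) (v : vec T) : vec T :=
  fun i => \sum_j A i j * v j.
Definition expect (T : finType) (v : vec T) (A : op T) : C :=
  \sum_i \sum_j (v i)^* * A i j * v j.
Definition conjvec (T : finType) (v : vec T) : vec T := fun i => (v i)^*.

Definition is_pure_state (T : finType) (v : vec T) : Prop :=
  \sum_i (v i)^* * v i = 1.
Definition is_density (T : finType) (rho : op T) : Prop :=
  (forall v : vec T, 0 <= expect v rho) /\ \sum_i rho i i = 1.

Variable n : nat.
Local Notation B := (bits n).
(* joint basis of R1 (first component) and R2 (second component) *)
Local Notation J := (B * B)%type.

Definition xorb_bits (a b : B) : B := [ffun k => xorb (a k) (b k)].
Definition dotb (a b : B) : nat := #|[set k | a k && b k]|.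

(* CNOT with control qubit j of R1 and target qubit j of R2 *)
Definition cnot_gate (j : 'I_n) : op J := fun o i =>
  ((o.1 == i.1) &&
   (o.2 == [ffun k => if k == j then xorb (i.2 k) (i.1 j) else i.2 k]))%:R.

(* Hadamard on qubit j of R1 *)
Definition hadamard_gate (j : 'I_n) : op J := fun o i =>
  ((o.2 == i.2) && [forall k, (k != j) ==> (o.1 k == i.1 k)])%:R *
  ((-1) ^+ (o.1 j && i.1 j) / sqrtC 2).

Definition shadow_circuit : op J :=
  circuit ([seq cnot_gate j | j <- enum 'I_n] ++
           [seq hadamard_gate j | j <- enum 'I_n]).

Definition joint_input (rho : op B) (zeta : vec B) : op J := fun o i =>
  rho o.1 i.1 * (zeta o.2 * (zeta i.2)^*).

(* Pr[x, z | zeta]: R1 measured as z, R2 measured as x *)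
Definition shadow_prob (rho : op B) (zeta : vec B) (x z : B) : C :=
  let U := shadow_circuit in
  mulop (mulop U (joint_input rho zeta)) (adjop U) (z, x) (z, x).

(* Pauli operators X^x = (x)_j X^{x_j} and Z^z = (x)_j Z^{z_j} *)
Definition Xpow (x : B) : op B := fun o i => (o == xorb_bits i x)%:R.
Definition Zpow (z : B) : op B := fun o i => (o == i)%:R * (-1) ^+ dotb z i.

Definition zeta_xz (zeta : vec B) (x z : B) : vec B :=
  applyop (Xpow x) (applyop (Zpow z) zeta).

End Defs.

(* Main.v *)
Require Import Defs.
From mathcomp Require Import all_boot all_order all_algebra.
From mathcomp Require Import ring.
From Stdlib Require Import FunctionalExtensionality.
Import GRing.Theory Num.Theory.
Local Open Scope ring_scope.

Lemma sum_pickl {C : numClosedFieldType} (T : finType) (a : T) (F : T -> C) :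
  \sum_m (m == a)%:R * F m = F a.
Proof.
rewrite (bigD1 a) //= eqxx mul1r big1 ?addr0 // => m /negbTE ->; by rewrite mul0r.
Qed.

Lemma sum_pickr {C : numClosedFieldType} (T : finType) (a : T) (F : T -> C) :
  \sum_m F m * (m == a)%:R = F a.
Proof.
rewrite (bigD1 a) //= eqxx mulr1 big1 ?addr0 // => m /negbTE ->; by rewrite mulr0.
Qed.

Lemma mulopA {C : numClosedFieldType} (T : finType) (A B D : op C T) :
  mulop A (mulop B D) = mulop (mulop A B) D.
Proof.
apply: functional_extensionality => o; apply: functional_extensionality => i.
rewrite /mulop.
under eq_bigr do rewrite big_distrr /=.
rewrite exchange_big /=; apply: eq_bigr => k _; rewrite big_distrl /=.
by apply: eq_bigr => l _; rewrite mulrA.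
Qed.

Lemma mulop1r {C : numClosedFieldType} (T : finType) (A : op C T) :
  mulop A (@idop C T) = A.
Proof.
apply: functional_extensionality => o; apply: functional_extensionality => i.
rewrite /mulop /idop.
by rewrite sum_pickr.
Qed.

Lemma mulop1l {C : numClosedFieldType} (T : finType) (A : op C T) :
  mulop (@idop C T) A = A.
Proof.
apply: functional_extensionality => o; apply: functional_extensionality => i.
rewrite /mulop /idop.
under eq_bigr do rewrite eq_sym.
by rewrite sum_pickl.
Qed.

Lemma foldl_circ {C : numClosedFieldType} (T : finType) (gs : seq (op C T)) A :
  foldl (fun acc g => mulop g acc) A gs = mulop (circuit gs) A.
Proof.
elim: gs A => [|g gs IH] A /=; first by rewrite /circuit /= mulop1l.
by rewrite /circuit /= !IH mulop1r mulopA.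
Qed.

Lemma circuit_cat {C : numClosedFieldType} (T : finType) (s1 s2 : seq (op C T)) :
  circuit (s1 ++ s2) = mulop (circuit s2) (circuit s1).
Proof. by rewrite /circuit foldl_cat foldl_circ. Qed.

Lemma circuit_rcons {C : numClosedFieldType} (T : finType) (s : seq (op C T)) g :
  circuit (rcons s g) = mulop g (circuit s).
Proof. by rewrite /circuit foldl_rcons. Qed.

Definition Fs {n : nat} (s : seq 'I_n) (i : bits n * bits n) : bits n * bits n :=
  (i.1, [ffun k => xorb (i.2 k) (odd (count_mem k s) && i.1 k)]).

Lemma cnot_circ {C : numClosedFieldType} {n : nat} (s : seq 'I_n) o i :
  circuit [seq @cnot_gate C n j | j <- s] o i = (o == Fs s i)%:R.
Proof.
elim/last_ind: s o i => [|s j IH] o i.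
  rewrite /circuit /= /idop; congr (_ %:R); congr (_ == _).
  by case: i => a b; rewrite /Fs /=; congr pair; apply/ffunP => k; rewrite ffunE; case: (b k).
rewrite map_rcons circuit_rcons /mulop.
under eq_bigr do rewrite IH.
rewrite sum_pickr /cnot_gate; congr (_ %:R).
case: o => o1 o2; rewrite /Fs /= xpair_eqE; congr (_ && (_ == _)).
apply/ffunP => k; rewrite !ffunE -cats1 count_cat /= addn0 oddD.
have [->|kj] := eqVneq k j; rewrite /= ?eqxx /=.
  by case: (i.2 j); case: (i.1 j); case: (odd _).
by case: (odd _).
Qed.

Definition flipj {n : nat} (j : 'I_n) (f : bits n) : bits n :=
  [ffun k => if k == j then ~~ f k else f k].

Lemma sum_had {C : numClosedFieldType} {n : nat} (j : 'I_n) (o : bits n * bits n)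
   (G : bits n * bits n -> C) :
  \sum_m hadamard_gate C j o m * G m =
  (-1)^+(o.1 j) / sqrtC 2 * G o + 1 / sqrtC 2 * G (flipj j o.1, o.2).
Proof.
set b := (flipj j o.1, o.2).
have bo : b != o.
  apply/negP => /eqP e; have := f_equal (fun p : bits n * bits n => p.1 j) e.
  rewrite /= /flipj ffunE eqxx.
  by case: (o.1 j).
rewrite (bigD1 o) // (bigD1 b) /=; last by rewrite bo.
rewrite big1 ?addr0.
  rewrite /hadamard_gate /= !eqxx /= andbb.
  have -> : [forall k, (k != j) ==> (o.1 k == o.1 k)] by apply/forallP => k; rewrite eqxx implybT.
  have -> : [forall k, (k != j) ==> (o.1 k == (flipj j o.1) k)].
    by apply/forallP => k; apply/implyP => kj; rewrite /flipj ffunE (negbTE kj).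
  by rewrite /flipj ffunE eqxx andbN !mul1r.
move=> m /andP [mo mb]; rewrite /hadamard_gate.
case: (boolP ((o.2 == m.2) && _)) => [/andP [/eqP e2 /forallP e1] | _]; last by rewrite !mul0r.
exfalso; case: (boolP (o.1 j == m.1 j)) => ej.
  move/negP: mo; apply; apply/eqP; case: m e2 e1 ej {mb} => m1 m2 /= e2 e1 ej.
  have -> : o = (o.1, o.2) by case: o {bo b e2 e1 ej}.
  rewrite -e2; congr pair; apply/ffunP => k.
  have [->|kj] := eqVneq k j; first by apply/eqP; rewrite eq_sym.
  by apply/eqP; rewrite eq_sym; move: (e1 k); rewrite kj.
move/negP: mb; apply; apply/eqP; case: m e2 e1 ej {mo} => m1 m2 /= e2 e1 ej.
rewrite /b -e2; congr pair; apply/ffunP => k; rewrite /flipj ffunE.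
have [->|kj] := eqVneq k j; first by move: ej; case: (o.1 j); case: (m1 j).
by apply/eqP; rewrite eq_sym; move: (e1 k); rewrite kj.
Qed.

Definition Hs {C : numClosedFieldType} {n : nat} (s : seq 'I_n) : op C (bits n * bits n)%type :=
  fun o i =>
  ((o.2 == i.2) && [forall k, (k \notin s) ==> (o.1 k == i.1 k)])%:R *
  \prod_(k <- s) ((-1)^+(o.1 k && i.1 k) / sqrtC 2).

Lemma forall_split {n : nat} (s : seq 'I_n) j (f g : bits n) : j \notin s ->
  [forall k, (k \notin s) ==> (f k == g k)] =
  [forall k, ((k \notin s) && (k != j)) ==> (f k == g k)] && (f j == g j).
Proof.
move=> js; apply/forallP/andP => [H|[/forallP H1 H2]].
  split; last by move: (H j); rewrite js.
  by apply/forallP => k; apply/implyP => /andP [ks _]; move: (H k); rewrite ks.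
move=> k; apply/implyP => ks; have [->//|kj] := eqVneq k j.
by move: (H1 k); rewrite ks kj.
Qed.

Lemma had_circ {C : numClosedFieldType} {n : nat} (s : seq 'I_n) o i : uniq s ->
  circuit [seq hadamard_gate C j | j <- s] o i = Hs s o i.
Proof.
elim/last_ind: s o i => [|s j IH] o i.
  move=> _; rewrite /circuit /= /idop /Hs big_nil mulr1; congr (_ %:R).
  case: o i => [o1 o2] [i1 i2] /=; rewrite xpair_eqE andbC; congr (_ && _).
  apply/eqP/forallP => [->//|H]; apply/ffunP => k; exact/eqP/H.
rewrite rcons_uniq => /andP [js us].
rewrite map_rcons circuit_rcons /mulop.
under eq_bigr do rewrite IH //.
rewrite sum_had /Hs /=.
rewrite (forall_split s j o.1 i.1 js) (forall_split s j (flipj j o.1) i.1 js).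
have -> : [forall k, (k \notin s) && (k != j) ==> (flipj j o.1 k == i.1 k)] =
          [forall k, (k \notin s) && (k != j) ==> (o.1 k == i.1 k)].
  apply: eq_forallb => k; rewrite /flipj ffunE.
  by have [->|//] := eqVneq k j; rewrite andbF.
have -> : [forall k, (k \notin rcons s j) ==> (o.1 k == i.1 k)] =
          [forall k, (k \notin s) && (k != j) ==> (o.1 k == i.1 k)].
  by apply: eq_forallb => k; rewrite mem_rcons in_cons negb_or andbC.
have -> : \prod_(k <- s) ((-1) ^+ (flipj j o.1 k && i.1 k) / sqrtC 2) =
          \prod_(k <- s) ((-1) ^+ (o.1 k && i.1 k) / sqrtC 2) :> C.
  apply: eq_big_seq => k ks; rewrite /flipj ffunE.
  by have [kj|//] := eqVneq k j; move: js; rewrite -kj ks.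
rewrite big_rcons /= /flipj ffunE eqxx.
case: (o.2 == i.2); case: [forall _, _]; case: (o.1 j); case: (i.1 j) => /=; ring.
Qed.

Definition cc {C : numClosedFieldType} {n : nat} (a b : bits n) : C :=
  \prod_k ((-1)^+(a k && b k) / sqrtC 2).

Lemma U_entry {C : numClosedFieldType} {n : nat} (o i : bits n * bits n) :
  shadow_circuit C o i =
  (o.2 == [ffun k => xorb (i.2 k) (i.1 k)])%:R * cc o.1 i.1.
Proof.
rewrite /shadow_circuit circuit_cat /mulop.
under eq_bigr do rewrite cnot_circ.
rewrite sum_pickr had_circ ?enum_uniq // /Hs /cc big_enum /=.
rewrite /Fs /=.
have -> : [forall k, (k \notin enum 'I_n) ==> (o.1 k == i.1 k)] = true.
  by apply/forallP => k; rewrite mem_enum.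
rewrite andbT; congr (_ %:R * _); congr (_ == _); apply/ffunP => k.
by rewrite !ffunE count_uniq_mem ?enum_uniq // mem_enum andTb.
Qed.

Lemma sum_pick_gen {C : numClosedFieldType} (T : finType) (P : pred T) (a : T) (F : T -> C) :
  (forall m, P m = (m == a)) -> \sum_m (P m)%:R * F m = F a.
Proof. move=> HP; under eq_bigr do rewrite HP; exact: sum_pickl. Qed.

Definition sgp {C : numClosedFieldType} {n : nat} (a b : bits n) : C :=
  \prod_k (-1)^+(a k && b k).

Lemma dotb_sgp {C : numClosedFieldType} {n : nat} (a b : bits n) :
  (-1)^+(dotb a b) = sgp a b :> C.
Proof.
rewrite /dotb -prodr_const /sgp big_mkcond /=; apply: eq_bigr => k _.
by rewrite inE; case: (a k && b k).
Qed.

Lemma conj_sgp {C : numClosedFieldType} {n : nat} (a b : bits n) :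
  (sgp a b : C)^* = sgp a b.
Proof.
rewrite /sgp rmorph_prod; apply: eq_bigr => k _; by rewrite rmorphXn rmorphN1.
Qed.

Lemma cc_sgp {C : numClosedFieldType} {n : nat} (a b : bits n) :
  (cc a b : C) = sgp a b * (sqrtC 2)^-1 ^+ n.
Proof.
rewrite /cc /sgp big_split /=; congr (_ * _).
by rewrite prodr_const card_ord.
Qed.

Lemma key {C : numClosedFieldType} {n : nat} (z a a' x : bits n) :
  (cc z a : C) * (cc z a')^* =
  (2 ^+ n)^-1 * (sgp z (xorb_bits a x) * sgp z (xorb_bits a' x)).
Proof.
rewrite !cc_sgp rmorphM /= conj_sgp rmorphXn /= fmorphV /=.
have s2 : (sqrtC 2 : C)^* = sqrtC 2.
  by apply: conj_Creal; apply: sqrtC_real; rewrite ler0n.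
rewrite s2.
have -> : sgp z a * (sqrtC 2)^-1 ^+ n * (sgp z a' * (sqrtC 2)^-1 ^+ n) =
          ((sqrtC 2)^-1 * (sqrtC 2)^-1) ^+ n * (sgp z a * sgp z a' : C).
  by rewrite exprMn; ring.
rewrite -invfM -expr2 sqrtCK exprVn; congr (_ * _).
rewrite /sgp -!big_split /=; apply: eq_bigr => k _; rewrite !ffunE.
by case: (z k); case: (a k); case: (a' k); case: (x k) => /=; ring.
Qed.

Lemma xor_pick {n : nat} (x a b : bits n) :
  (x == [ffun k => xorb (b k) (a k)]) = (b == xorb_bits a x).
Proof.
apply/eqP/eqP => [->|->]; apply/ffunP => k; rewrite !ffunE;
  by case: (a k); case: (b k); try case: (x k).
Qed.

Lemma xor_pick2 {n : nat} (x i j : bits n) :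
  (i == xorb_bits j x) = (j == xorb_bits i x).
Proof.
apply/eqP/eqP => [->|->]; apply/ffunP => k; rewrite !ffunE;
  by case: (i k); case: (j k); case: (x k).
Qed.

Lemma sumJ {C : numClosedFieldType} {n : nat} (F : bits n * bits n -> C) :
  \sum_p F p = \sum_a \sum_b F (a, b).
Proof. by rewrite pair_bigA /=; apply: eq_bigr => -[a b]. Qed.

Lemma w_eq {C : numClosedFieldType} {n : nat} (zeta : vec C (bits n)) (x z i : bits n) :
  zeta_xz zeta x z i = (-1)^+(dotb z (xorb_bits i x)) * zeta (xorb_bits i x).
Proof.
rewrite /zeta_xz /applyop /Xpow /Zpow.
rewrite (@sum_pick_gen C _ (fun j => i == xorb_bits j x) (xorb_bits i x)); last first.
  by move=> m; rewrite xor_pick2.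
under eq_bigr do rewrite -mulrA eq_sym.
by rewrite sum_pickl.
Qed.

Lemma inner_eq {C : numClosedFieldType} {n : nat} (rho : op C (bits n)) (zeta : vec C (bits n))
   (x z : bits n) (k : bits n * bits n) :
  \sum_j shadow_circuit C (z, x) j * joint_input rho zeta j k =
  \sum_a cc z a * rho a k.1 * (zeta (xorb_bits a x) * (zeta k.2)^*).
Proof.
rewrite sumJ; apply: eq_bigr => a _.
under eq_bigr do rewrite U_entry /joint_input /= -!mulrA.
rewrite (@sum_pick_gen C _ (fun b : bits n => x == [ffun k => xorb (b k) (a k)]) (xorb_bits a x)).
  by rewrite !mulrA.
by move=> m; rewrite xor_pick.
Qed.

Theorem proposition4 (C : numClosedFieldType) (n : nat)
    (rho : op C (bits n)) (zeta : vec C (bits n)) :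
  is_density rho -> is_pure_state zeta ->
  forall x z : bits n,
    shadow_prob rho zeta x z =
    (2 ^+ n)^-1 * expect (conjvec (zeta_xz zeta x z)) rho.
Proof.
move=> _ _ x z.
rewrite /shadow_prob /mulop /adjop /expect /conjvec.
under eq_bigr do rewrite inner_eq U_entry rmorphM /= conjC_nat mulrCA.
rewrite sumJ.
under eq_bigr => a' _ do
  rewrite (@sum_pick_gen C _ (fun b : bits n => x == [ffun k => xorb (b k) (a' k)]) (xorb_bits a' x)
     _ (fun m => xor_pick x a' m)) /=.
under eq_bigr do rewrite big_distrl /=.
rewrite exchange_big big_distrr /=; apply: eq_bigr => a _.
rewrite big_distrr /=; apply: eq_bigr => a' _.
rewrite conjCK !w_eq rmorphM /= !dotb_sgp conj_sgp.
have K := @key C n z a a' x.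
transitivity ((cc z a * (cc z a')^*) * (rho a a' * (zeta (xorb_bits a x) * (zeta (xorb_bits a' x))^*)));
  first by ring.
rewrite K; ring.
Qed.
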